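(* Let $K$ be a field, $\kappa$ an infinite cardinal, and $\mathcal R=(R_\beta\mid\beta<\kappa)$ a sequence of semiartinian $K$-algebras each of which has a conormed multiplicative basis. Then $R=R(\kappa,K,\mathcal R)$ has a conormed multiplicative basis. If moreover $R_0$ possesses a conormed strong multiplicative basis $B_0$ containing a non-zero idempotent $e\in\mathrm{Soc}(R_0)$, then $R$ has a conormed strong multiplicative basis. In particular, the $K$-algebra $R(\kappa,K)$ of all sequences in $K^\kappa$ that are constant except for finitely many terms has a conormed strong multiplicative basis.
   Context: $R(\kappa,K,\mathcal R)$ denotes the $K$-subalgebra $I\oplus1_P\cdot K$ of $P=\prod_{\beta<\kappa}R_\beta$, where $I=\bigoplus_{\beta<\kappa}R_\beta$. Socle sequence: $S_0=0$, $S_{\alpha+1}/S_\alpha=\mathrm{Soc}(R/S_\alpha)$, unions at limits; semiartinian of Loewy length $\sigma+1$ means $S_{\sigma+1}=R\ne S_\sigma$. A $K$-linear basis $B$ is multiplicative if for all $b,b'\in B$ either $bb'=0$ or $bb'\in B$, strong multiplicative if $bb'\in B$ for all $b,b'\in B$. A basis $B$ of a semiartinian $K$-algebra of Loewy length $\sigma+1$ is conormed if $B$ contains a $K$-basis of $S_\alpha$ for each $\alpha\le\sigma$. *)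

(* Defs.v *)
From HB Require Import structures.
From Stdlib Require List.
From mathcomp Require Import all_boot all_algebra.

Set Implicit Arguments.
Unset Strict Implicit.
Unset Printing Implicit Defensive.

Import GRing.Theory.
Local Open Scope ring_scope.

(* A K-algebra presented concretely: its elements are the [x : kcar] with
   [kin x]; operations are zero, addition, multiplication and K-scaling.
   This lets us treat uniformly an abstract [algType K] (kin = everything)
   and the subalgebra R(kappa,K,R) of the (dependent) product. *)
Record kalg (K : fieldType) := KAlg {
  kcar : Type;
  kin : kcar -> Prop;
  kzero : kcar;
  kadd : kcar -> kcar -> kcar;
  kmul : kcar -> kcar -> kcar;
  kscale : K -> kcar -> kcar }.
Arguments kcar {K} k.
Arguments kin {K} k _.
Arguments kzero {K} k.
Arguments kadd {K} k _ _.
Arguments kmul {K} k _ _.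
Arguments kscale {K} k _ _.

Section Notions.
Variables (K : fieldType) (A : kalg K).
Local Notation T := (kcar A).
Local Notation kset := (T -> Prop).

Definition ksubset (X Y : kset) : Prop := forall x, X x -> Y x.

Definition ksum (s : seq T) : T := foldr (kadd A) (kzero A) s.

Definition right_ideal (J : kset) : Prop :=
  [/\ ksubset J (kin A), J (kzero A),
      (forall x y, J x -> J y -> J (kadd A x y)),
      (forall (k : K) x, J x -> J (kscale A k x)) &
      (forall x r, J x -> kin A r -> J (kmul A x r))].

(* J is a right ideal containing S with J/S a simple right A-module
   (i.e. a minimal non-zero submodule of A/S) *)
Definition minimal_over (S J : kset) : Prop :=
  [/\ right_ideal J, ksubset S J, (exists x, J x /\ ~ S x) &
      (forall J', right_ideal J' -> ksubset S J' -> ksubset J' J ->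
                  ksubset J' S \/ ksubset J J')].

(* preimage in A of Soc(A/S) (right socle: sum of simple right submodules) *)
Definition socle_next (S : kset) : kset := fun x =>
  exists y, S y /\
  exists l : seq (kset * T),
    (forall p, List.In p l -> minimal_over S p.1 /\ p.1 p.2) /\
    x = kadd A y (ksum (map snd l)).

(* The terms S_alpha of the socle sequence: S_0 = 0, S_(alpha+1) = socle_next
   S_alpha, unions at limits.  Without an ordinal library, the class
   {S_alpha | alpha ordinal} is described as the least class containing 0,
   closed under the successor step and under unions of nonempty subfamilies
   (the S_alpha form an increasing chain, so such a union is again some
   S_beta). *)
Inductive socle_term : kset -> Prop :=
  | socle_term0 : socle_term (fun x => x = kzero A)
  | socle_termS S : socle_term S -> socle_term (socle_next S)
  | socle_termU (J : Type) (f : J -> kset) :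
      inhabited J -> (forall j, socle_term (f j)) ->
      socle_term (fun x => exists j, f j x).

Definition semiartinian : Prop :=
  exists S, socle_term S /\ forall x, S x <-> kin A x.

Definition kspan (B : kset) : kset := fun x =>
  exists l : seq (K * T),
    (forall p, List.In p l -> B p.2) /\
    x = ksum (map (fun p => kscale A p.1 p.2) l).

Definition kindependent (B : kset) : Prop :=
  forall l : seq (K * T),
    List.NoDup (map snd l) ->
    (forall p, List.In p l -> B p.2) ->
    ksum (map (fun p => kscale A p.1 p.2) l) = kzero A ->
    forall p, List.In p l -> p.1 = 0.

Definition basis_of (S B : kset) : Prop :=
  [/\ ksubset B S, kindependent B & forall x, S x <-> kspan B x].

Definition kbasis (B : kset) : Prop := basis_of (kin A) B.

Definition conormed (B : kset) : Prop :=
  kbasis B /\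
  forall S, socle_term S -> exists B', ksubset B' B /\ basis_of S B'.

Definition multiplicative (B : kset) : Prop :=
  forall b b', B b -> B b' -> kmul A b b' = kzero A \/ B (kmul A b b').

Definition strong_multiplicative (B : kset) : Prop :=
  forall b b', B b -> B b' -> B (kmul A b b').

End Notions.

Definition alg_kalg (K : fieldType) (A : algType K) : kalg K :=
  @KAlg K A (fun _ => True) 0 +%R *%R *:%R.

(* R(kappa,K,R) = (direct sum of the R_i) + K.1 inside the product of the R_i:
   the elements x of the product that are equal to k.1 outside a finite set
   of indices, for some k in K. *)
Definition Rk (K : fieldType) (I : Type) (R : I -> algType K) : kalg K :=
  @KAlg K (forall i, R i)
    (fun x => exists k : K, exists s : seq I,
        forall i, ~ List.In i s -> x i = k%:A)
    (fun i => 0)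
    (fun x y i => x i + y i)
    (fun x y i => x i * y i)
    (fun k x i => k *: x i).

Definition infinite_type (I : Type) : Prop :=
  exists f : nat -> I, injective f.

(* Main.v *)
Require Import Defs.
From Stdlib Require Import Classical ClassicalEpsilon FunctionalExtensionality PropExtensionality.
From Stdlib Require FinFun.
From mathcomp Require Import all_boot all_algebra.

Local Open Scope ring_scope.

Module Helpers.
Set Implicit Arguments.
Unset Strict Implicit.
Unset Printing Implicit Defensive.
Import GRing.Theory.
Local Open Scope ring_scope.

Lemma pred_ext (T : Type) (X Y : T -> Prop) :
  (forall x, X x -> Y x) -> (forall x, Y x -> X x) -> X = Y.
Proof.
move=> h1 h2; apply: functional_extensionality => x.
by apply: propositional_extensionality; split; [apply: h1 | apply: h2].
Qed.

Section Gen.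
Variables (K : fieldType) (A : kalg K).
Local Notation T := (kcar A).
Local Notation "x +' y" := (kadd A x y) (at level 50, left associativity).
Local Notation z0 := (kzero A).

Hypothesis kin0 : kin A z0.
Hypothesis kinD : forall x y, kin A x -> kin A y -> kin A (x +' y).
Hypothesis add0 : forall x, x +' z0 = x.
Hypothesis addA : forall x y z, x +' (y +' z) = (x +' y) +' z.
Hypothesis addC : forall x y, x +' y = y +' x.
Hypothesis mulDl : forall x y r, kmul A (x +' y) r = kmul A x r +' kmul A y r.
Hypothesis mul0l : forall r, kmul A z0 r = z0.
Hypothesis scaleD : forall k x y, kscale A k (x +' y) = kscale A k x +' kscale A k y.
Hypothesis scale0 : forall k, kscale A k z0 = z0.

Lemma st0 (S : T -> Prop) : socle_term S -> S z0.
Proof.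
elim=> {S} [//| S _ IH | J f [j] _ IH].
- by exists z0; split=> //; exists [::]; split=> //= ; rewrite /ksum /= add0.
- by exists j; apply: IH.
Qed.

Lemma st_infl (S : T -> Prop) : ksubset S (socle_next S).
Proof. by move=> x Sx; exists x; split=> //; exists [::]; split=> //=; rewrite /ksum /= add0. Qed.

Definition normal (c : T -> Prop) :=
  forall x, socle_term x -> ksubset x c -> ~ ksubset c x -> ksubset (socle_next x) c.

Lemma L1 (c : T -> Prop) : socle_term c -> normal c ->
  forall x, socle_term x -> ksubset x c \/ ksubset (socle_next c) x.
Proof.
move=> stc nc x; elim=> {x} [| y sty IH | J f [j] stf IH].
- by left=> x ->; apply: st0.
- case: IH => [yc | cy].
  + case: (classic (ksubset c y)) => [cy | ncy].
    * have -> : y = c by apply: pred_ext.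
      by right.
    * by left; apply: nc.
  + by right=> z /cy; apply: st_infl.
- case: (classic (exists j, ksubset (socle_next c) (f j))) => [[j' h] | h].
  + by right=> z /h zf; exists j'.
  + left=> z [j' fz]; case: (IH j') => [/(_ z fz) //| h'].
    by case: h; exists j'.
Qed.

Lemma L2 (c : T -> Prop) : socle_term c -> normal c.
Proof.
elim=> {c} [| d std IH | J f [j] stf IH].
- move=> x stx x0 n0; exfalso; apply: n0 => z ->; exact: st0.
- move=> x stx xd nd.
  case: (L1 std IH stx) => [xd' | dx]; last by exfalso; apply: nd.
  case: (classic (ksubset d x)) => [dx | ndx].
  + have -> : x = d by apply: pred_ext.
    by [].
  + by move=> z /(IH x stx xd' ndx); apply: st_infl.
- move=> x stx xU nU.
  have [j' [z [fz nxz]]] : exists j', exists z, f j' z /\ ~ x z.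
    apply: NNPP => h; apply: nU => z [j' fz]; apply: NNPP => nxz.
    by apply: h; exists j'; exists z.
  case: (L1 (stf j') (IH j') stx) => [xf | fx].
  + have nfx : ~ ksubset (f j') x by move=> h; apply: nxz; apply: h.
    by move=> w /(IH j' x stx xf nfx) fw; exists j'.
  + by exfalso; apply: nxz; apply: fx; apply: st_infl.
Qed.

Lemma chain (x y : T -> Prop) : socle_term x -> socle_term y -> ksubset x y \/ ksubset y x.
Proof.
move=> stx sty; case: (L1 sty (L2 sty) stx) => [h|h]; first by left.
by right=> z /st_infl /h.
Qed.

Lemma fixpoint (S : T -> Prop) : socle_term S -> ksubset (socle_next S) S ->
  forall X, socle_term X -> ksubset X S.
Proof.
move=> stS fS X; elim=> {X} [| X stX IH | J f [j] stf IH].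
- by move=> z ->; apply: st0.
- case: (classic (ksubset S X)) => [SX | nSX].
  + have -> : X = S by apply: pred_ext.
    by [].
  + exact: (L2 stS stX IH nSX).
- by move=> z [j' fz]; apply: (IH j').
Qed.

Lemma ksum_cat (l l' : seq T) : ksum (l ++ l') = ksum l +' ksum l'.
Proof.
elim: l => [|a l IH] /=; first by rewrite /ksum /= addC add0.
by rewrite /ksum /= -/(ksum _) IH addA.
Qed.

Lemma add4 a b c d : (a +' b) +' (c +' d) = (a +' c) +' (b +' d).
Proof.
rewrite -!addA; congr (_ +' _); rewrite !addA; congr (_ +' _); exact: addC.
Qed.

Lemma next_ideal (S : T -> Prop) : right_ideal S -> right_ideal (socle_next S).
Proof.
case=> Sk S0 SD SZ SM.
have sumin : forall l : seq ((T -> Prop) * T),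
   (forall p, List.In p l -> minimal_over S p.1 /\ p.1 p.2) -> kin A (ksum (map snd l)).
  elim=> [|p l IH] hl /=; first by [].
  have [[[Jk _ _ _ _] _ _ _] Jp] := hl p (or_introl erefl).
  apply: kinD; first exact: Jk.
  by apply: IH => q hq; apply: hl; right.
split.
- by move=> x [y [Sy [l [hl ->]]]]; apply: kinD; [apply: Sk | apply: sumin].
- exact: st_infl.
- move=> x y [x1 [Sx1 [l [hl ->]]]] [y1 [Sy1 [l' [hl' ->]]]].
  exists (x1 +' y1); split; first exact: SD.
  exists (l ++ l'); split.
    by move=> p hp; case: (List.in_app_or _ _ _ hp) => ?; [apply: hl | apply: hl'].
  rewrite map_cat ksum_cat.
  exact: add4.
- move=> k x [x1 [Sx1 [l [hl ->]]]].
  exists (kscale A k x1); split; first exact: SZ.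
  exists (map (fun p => (p.1, kscale A k p.2)) l); split.
    move=> p /List.in_map_iff [q [<- qin]] /=.
    have [mq qq] := hl q qin; split=> //.
    by case: mq => [[_ _ _ JZ _] _ _ _]; apply: JZ.
  rewrite scaleD; congr (_ +' _).
  elim: l {hl} => [|q l IH] /=; first by rewrite /ksum /= scale0.
  by rewrite /ksum /= -!/(ksum _) scaleD IH.
- move=> x r [x1 [Sx1 [l [hl ->]]]] kr.
  exists (kmul A x1 r); split; first exact: SM.
  exists (map (fun p => (p.1, kmul A p.2 r)) l); split.
    move=> p /List.in_map_iff [q [<- qin]] /=.
    have [mq qq] := hl q qin; split=> //.
    by case: mq => [[_ _ _ _ JM] _ _ _]; apply: JM.
  rewrite mulDl; congr (_ +' _).
  elim: l {hl} => [|q l IH] /=; first by rewrite /ksum /= mul0l.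
  by rewrite /ksum /= -!/(ksum _) mulDl IH.
Qed.

Lemma st_ideal (S : T -> Prop) : socle_term S -> right_ideal S.
Proof.
move=> stS; elim: stS (stS) => {S} [| S stS IH | J f [j] stf IH] st.
- split.
  + by move=> x ->.
  + by [].
  + by move=> x y -> ->; rewrite add0.
  + by move=> k x ->; rewrite scale0.
  + by move=> x r -> _; rewrite mul0l.
- exact: next_ideal (IH stS).
- have Ij := fun j => IH j (stf j).
  split.
  + by move=> x [j' fx]; case: (Ij j') => Jk _ _ _ _; apply: Jk.
  + by exists j; apply: st0.
  + move=> x y [j1 fx] [j2 fy].
    case: (chain (stf j1) (stf j2)) => h.
    * by exists j2; case: (Ij j2) => _ _ D _ _; apply: D => //; apply: h.
    * by exists j1; case: (Ij j1) => _ _ D _ _; apply: D => //; apply: h.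
  + by move=> k x [j' fx]; exists j'; case: (Ij j') => _ _ _ Z _; apply: Z.
  + by move=> x r [j' fx] kr; exists j'; case: (Ij j') => _ _ _ _ M; apply: M.
Qed.

End Gen.

Definition dec (P : Prop) : {P} + {~ P} := excluded_middle_informative P.

Section AlgK.
Variables (K : fieldType) (B : algType K).
Let A := alg_kalg B.
Lemma ak_ideal (S : B -> Prop) : socle_term (A := A) S -> right_ideal (A := A) S.
Proof.
apply: st_ideal => //.
- by move=> x; rewrite /= addr0.
- by move=> x y z; rewrite /= addrA.
- by move=> x y; rewrite /= addrC.
- by move=> x y r; rewrite /= mulrDl.
- by move=> r; rewrite /= mul0r.
- by move=> k x y; rewrite /= scalerDr.
- by move=> k; rewrite /= scaler0.
Qed.
Lemma ak_chain (X Y : B -> Prop) : socle_term (A := A) X -> socle_term (A := A) Y ->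
  ksubset (A := A) X Y \/ ksubset (A := A) Y X.
Proof. by apply: chain => x; rewrite /= addr0. Qed.
Lemma ak_L2 (c : B -> Prop) : socle_term (A := A) c -> normal (A := A) c.
Proof. by apply: L2 => x; rewrite /= addr0. Qed.
Lemma ak_infl (S : B -> Prop) : ksubset (A := A) S (socle_next (A := A) S).
Proof. by apply: st_infl => x; rewrite /= addr0. Qed.
Lemma ak_fix (S : B -> Prop) : socle_term (A := A) S -> ksubset (A := A) (socle_next (A := A) S) S ->
  forall X, socle_term (A := A) X -> ksubset (A := A) X S.
Proof. by apply: fixpoint => x; rewrite /= addr0. Qed.

Lemma ri_sub (S : B -> Prop) : right_ideal (A := A) S -> forall x y, S x -> S y -> S (x - y).
Proof.
case=> _ _ D Z _ x y Sx Sy; apply: D => //.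
by rewrite -scaleN1r; apply: (Z (-1) y).
Qed.
Lemma ri_full (S : B -> Prop) : right_ideal (A := A) S -> S 1 -> forall y, S y.
Proof. by case=> _ _ _ _ M S1 y; rewrite -(mul1r y); apply: M. Qed.
Lemma ri_scale1 (S : B -> Prop) : right_ideal (A := A) S -> forall k : K, k != 0 -> S (k%:A) -> S 1.
Proof.
case=> _ _ _ Z _ k k0 Sk; have := Z k^-1 _ Sk; rewrite /= scalerA mulVf // scale1r //.
Qed.
End AlgK.

Section RkSec.
Variables (K : fieldType) (I : Type) (R : I -> algType K).
Hypothesis inf : infinite_type I.
Local Notation P := (forall i, R i).
Local Notation RK := (Rk R).

Lemma fresh (s : seq I) : exists i, ~ List.In i s.
Proof.
case: inf => f finj; apply: NNPP => h.
have ins : forall i, List.In i s by move=> i; apply: NNPP => ni; apply: h; exists i.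
have nd : List.NoDup (List.map f (List.seq 0 (size s).+1)).
  apply: FinFun.Injective_map_NoDup; first by move=> a b; apply: finj.
  exact: List.seq_NoDup.
have := List.NoDup_incl_length nd (fun x _ => ins x).
rewrite List.length_map List.length_seq.
have -> : List.length s = size s by [].
by move/leP; rewrite ltnn.
Qed.

Lemma fext (x y : P) : (forall i, x i = y i) -> x = y.
Proof. exact: functional_extensionality_dep. Qed.

Definition emb (i : I) (y : R i) : P := fun j =>
  match dec (i = j) with
  | left e => eq_rect i R y j e
  | right _ => 0
  end.

Lemma emb_id i y : emb y i = y.
Proof.
rewrite /emb; case: (dec (i = i)) => [e|n]; last by case: n.
by rewrite (proof_irrelevance _ e erefl).
Qed.

Lemma emb_ne i j y : i <> j -> emb (i := i) y j = 0.
Proof. by rewrite /emb; case: (dec (i = j)). Qed.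

Lemma emb_cases i j (y : R i) : (i = j /\ exists e : i = j, emb y j = eq_rect i R y j e) \/ (i <> j /\ emb y j = 0).
Proof.
case: (dec (i = j)) => [e|n]; last by right; split=> //; apply: emb_ne.
left; split=> //; exists e; subst j; by rewrite emb_id.
Qed.

Lemma emb_add i (y y' : R i) : emb (y + y') = kadd RK (emb y) (emb y').
Proof.
apply: fext => j /=; case: (dec (i = j)) => [e|n].
  by subst j; rewrite !emb_id.
by rewrite !emb_ne // addr0.
Qed.

Lemma emb_scale i k (y : R i) : emb (k *: y) = kscale RK k (emb y).
Proof.
apply: fext => j /=; case: (dec (i = j)) => [e|n].
  by subst j; rewrite !emb_id.
by rewrite !emb_ne // scaler0.
Qed.

Lemma emb0 i : emb (0 : R i) = kzero RK.
Proof.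
apply: fext => j /=; case: (dec (i = j)) => [e|n].
  by subst j; rewrite !emb_id.
by rewrite !emb_ne.
Qed.

Lemma mul_emb_r (x : P) i (y : R i) : kmul RK x (emb y) = emb (x i * y).
Proof.
apply: fext => j /=; case: (dec (i = j)) => [e|n].
  by subst j; rewrite !emb_id.
by rewrite !emb_ne // mulr0.
Qed.

Lemma mul_emb_l (x : P) i (y : R i) : kmul RK (emb y) x = emb (y * x i).
Proof.
apply: fext => j /=; case: (dec (i = j)) => [e|n].
  by subst j; rewrite !emb_id.
by rewrite !emb_ne // mul0r.
Qed.

Lemma emb_inj i (y y' : R i) : emb y = emb y' -> y = y'.
Proof. by move=> h; rewrite -(emb_id y) h emb_id. Qed.

Lemma kin0 : kin RK (kzero RK).
Proof. by exists 0, [::] => i _ /=; rewrite scale0r. Qed.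

Lemma kinD x y : kin RK x -> kin RK y -> kin RK (kadd RK x y).
Proof.
move=> [k [s hs]] [k' [s' hs']]; exists (k + k'), (s ++ s') => i hi /=.
rewrite hs ?hs' ?scalerDl // => h; apply: hi; apply: List.in_or_app; tauto.
Qed.

Lemma kinZ k x : kin RK x -> kin RK (kscale RK k x).
Proof. by move=> [k' [s hs]]; exists (k * k'), s => i hi /=; rewrite hs // scalerA. Qed.

Lemma kinM x y : kin RK x -> kin RK y -> kin RK (kmul RK x y).
Proof.
move=> [k [s hs]] [k' [s' hs']]; exists (k * k'), (s ++ s') => i hi /=.
rewrite hs ?hs'; first by rewrite -scalerAl mul1r scalerA.
all: move=> h; apply: hi; apply: List.in_or_app; tauto.
Qed.

Lemma kin1 : kin RK (fun i => 1).
Proof. by exists 1, [::] => i _; rewrite scale1r. Qed.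

Lemma kin_emb i (y : R i) : kin RK (emb y).
Proof.
exists 0, [:: i] => j hj; rewrite scale0r emb_ne // => e; apply: hj; subst; by left.
Qed.

Lemma Rk_add0 (x : P) : kadd RK x (kzero RK) = x.
Proof. by apply: fext => i /=; rewrite addr0. Qed.

Lemma Rk_ideal (S : P -> Prop) : socle_term (A := RK) S -> right_ideal (A := RK) S.
Proof.
apply: (st_ideal (A := RK)).
- exact: kin0.
- exact: kinD.
- exact: Rk_add0.
- by move=> x y z; apply: fext => i /=; rewrite addrA.
- by move=> x y; apply: fext => i /=; rewrite addrC.
- by move=> x y r; apply: fext => i /=; rewrite mulrDl.
- by move=> r; apply: fext => i /=; rewrite mul0r.
- by move=> k x y; apply: fext => i /=; rewrite scalerDr.
- by move=> k; apply: fext => i /=; rewrite scaler0.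
Qed.

Lemma Rk_chain (X Y : P -> Prop) : socle_term (A := RK) X -> socle_term (A := RK) Y ->
  ksubset (A := RK) X Y \/ ksubset (A := RK) Y X.
Proof. exact: (chain (A := RK) Rk_add0). Qed.
Lemma Rk_L2 (c : P -> Prop) : socle_term (A := RK) c -> normal (A := RK) c.
Proof. exact: (L2 (A := RK) Rk_add0). Qed.
Lemma Rk_infl (S : P -> Prop) : ksubset (A := RK) S (socle_next (A := RK) S).
Proof. exact: (st_infl (A := RK) Rk_add0). Qed.
Lemma Rk_st0 (S : P -> Prop) : socle_term (A := RK) S -> S (kzero RK).
Proof. exact: (st0 (A := RK) Rk_add0). Qed.

Lemma Rri_sub (S : P -> Prop) : right_ideal (A := RK) S -> forall x y, S x -> S y ->
  S (fun i => x i - y i).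
Proof.
case=> _ _ D Z _ x y Sx Sy.
have -> : (fun i => x i - y i) = kadd RK x (kscale RK (-1) y).
  by apply: fext => i /=; rewrite scaleN1r.
by apply: D => //; apply: Z.
Qed.


Definition inI (x : P) := exists s : seq I, forall i, ~ List.In i s -> x i = 0.
Definition TT (S : P -> Prop) i : R i -> Prop := fun y => S (emb y).
Arguments TT S i _ : clear implicits.
Definition cc (S : P -> Prop) := exists x, S x /\ ~ inI x.
Definition Afin (S : P -> Prop) := exists s : seq I, forall i, ~ List.In i s -> TT S i 1.
Definition Inv (S : P -> Prop) :=
  [/\ (forall i, socle_term (A := alg_kalg (R i)) (TT S i)), (cc S -> Afin S) &
      forall x, S x <-> (kin RK x /\ (forall i, TT S i (x i)) /\ (inI x \/ cc S))].

Lemma emb_comp (x : P) i : kmul RK x (emb (1 : R i)) = emb (x i).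
Proof. by rewrite mul_emb_r mulr1. Qed.

Lemma pull_ideal (J : P -> Prop) i : right_ideal (A := RK) J ->
  right_ideal (A := alg_kalg (R i)) (fun y => J (emb y)).
Proof.
case=> Jk J0 JD JZ JM; split.
- by [].
- by rewrite /= emb0.
- by move=> x y Jx Jy /=; rewrite emb_add; apply: JD.
- by move=> k x Jx /=; rewrite emb_scale; apply: JZ.
- move=> x r Jx _ /=; have := JM _ (emb r) Jx (kin_emb r).
  by rewrite mul_emb_r emb_id.
Qed.

Lemma TT_comp (S : P -> Prop) i s0 : right_ideal (A := RK) S -> S s0 -> TT S i (s0 i).
Proof. by case=> _ _ _ _ M Ss; rewrite /TT -emb_comp; apply: M => //; apply: kin_emb. Qed.

Definition Splus (S : P -> Prop) i (L : R i -> Prop) : P -> Prop :=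
  fun w => exists s0 y, [/\ S s0, L y & w = kadd RK s0 (emb y)].

Lemma Splus_ideal (S : P -> Prop) i (L : R i -> Prop) :
  right_ideal (A := RK) S -> right_ideal (A := alg_kalg (R i)) L ->
  right_ideal (A := RK) (Splus S L).
Proof.
case=> Sk S0 SD SZ SM [Lk L0 LD LZ LM]; split.
- by move=> w [s0 [y [Ss Ly ->]]]; apply: kinD; [apply: Sk | apply: kin_emb].
- by exists (kzero RK), 0; split=> //; rewrite emb0 Rk_add0.
- move=> w w' [s0 [y [Ss Ly ->]]] [s1 [y1 [Ss1 Ly1 ->]]].
  exists (kadd RK s0 s1), (y + y1); split; [exact: SD | exact: LD |].
  rewrite emb_add; apply: fext => j /=; rewrite -!addrA; congr (_ + _).
  by rewrite addrCA.
- move=> k w [s0 [y [Ss Ly ->]]]; exists (kscale RK k s0), (k *: y); split.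
  + exact: SZ. + exact: LZ. + by rewrite emb_scale; apply: fext => j /=; rewrite scalerDr.
- move=> w r [s0 [y [Ss Ly ->]]] kr; exists (kmul RK s0 r), (y * r i); split.
  + exact: SM. + exact: LM. + by rewrite -mul_emb_l; apply: fext => j /=; rewrite mulrDl.
Qed.

Lemma Splus_sub (S : P -> Prop) i (L : R i -> Prop) :
  right_ideal (A := alg_kalg (R i)) L -> ksubset (A := RK) S (Splus S L).
Proof. by case=> _ L0 _ _ _ x Sx; exists x, 0; split=> //; rewrite emb0 Rk_add0. Qed.

Lemma minimal_comp (S J : P -> Prop) i (z : P) : right_ideal (A := RK) S ->
  minimal_over (A := RK) S J -> J z -> ~ TT S i (z i) ->
  minimal_over (A := alg_kalg (R i)) (TT S i) (fun y => J (emb y)).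
Proof.
move=> riS [riJ SJ _ minJ] Jz nT.
have riS' := riS; case: riS' => Sk S0 SD SZ SM.
have riJ' := riJ; case: riJ' => Jk J0 JD JZ JM.
split.
- exact: pull_ideal.
- by move=> y Sy; apply: SJ.
- exists (z i); split=> //; rewrite -emb_comp; apply: JM => //; exact: kin_emb.
- move=> L riL TL LJ.
  have riL' := riL; case: riL' => _ L0 LD _ _.
  case: (minJ (Splus S L)).
  + exact: Splus_ideal.
  + exact: Splus_sub.
  + move=> w [s0 [y [Ss Ly ->]]]; apply: JD; [exact: SJ | exact: LJ].
  + move=> h; left=> y Ly; rewrite /TT; apply: h.
    by exists (kzero RK), y; split=> //; apply: fext => j /=; rewrite add0r.
  + move=> h; right=> y Jy; have [s0 [y' [Ss Ly' e]]] := h _ Jy.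
    have -> : y = s0 i + y' by rewrite -[y](emb_id y) e /= emb_id.
    apply: LD => //; apply: TL; exact: TT_comp.
Qed.

Lemma minimal_lift (S : P -> Prop) i (L : R i -> Prop) : right_ideal (A := RK) S ->
  minimal_over (A := alg_kalg (R i)) (TT S i) L -> minimal_over (A := RK) S (Splus S L).
Proof.
move=> riS [riL TL [y0 [Ly0 nTy0]] minL].
have riS' := riS; case: riS' => Sk S0 SD SZ SM.
have riL' := riL; case: riL' => _ L0 LD LZ LM.
have riT : right_ideal (A := alg_kalg (R i)) (TT S i) by apply: pull_ideal.
split.
- exact: Splus_ideal.
- exact: Splus_sub.
- exists (emb y0); split=> //; exists (kzero RK), y0; split=> //.
  by apply: fext => j /=; rewrite add0r.
- move=> J' riJ' SJ' J'P.
  have riJ'' := riJ'; case: riJ'' => J'k J'0 J'D J'Z J'M.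
  case: (minL (fun y => J' (emb y))).
  + exact: pull_ideal.
  + by move=> y Ty; apply: SJ'.
  + move=> y J'y; have [s0 [y' [Ss Ly' e]]] := J'P _ J'y.
    have -> : y = s0 i + y' by rewrite -[y](emb_id y) e /= emb_id.
    apply: LD => //; apply: TL; exact: TT_comp.
  + move=> h; left=> w J'w; have [s0 [y [Ss Ly ew]]] := J'P _ J'w.
    have h1 : J' (emb (w i)) by rewrite -emb_comp; apply: J'M => //; apply: kin_emb.
    have h2 : TT S i (s0 i + y) by apply: h; move: h1; rewrite ew /= emb_id.
    have h3 : TT S i y.
      have -> : y = (s0 i + y) - s0 i by rewrite addrC addKr.
      apply: (ri_sub riT) => //; exact: TT_comp.
    by rewrite ew; apply: SD.
  + move=> h; right=> w [s0 [y [Ss Ly ->]]]; apply: J'D; [exact: SJ' | exact: h].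
Qed.

Lemma decomp (X : P -> Prop) : X (kzero RK) ->
  (forall a b, X a -> X b -> X (kadd RK a b)) ->
  forall (s : seq I) (x : P), (forall i, ~ List.In i s -> x i = 0) ->
  (forall i, X (emb (x i))) -> X x.
Proof.
move=> X0 XD; elim=> [|a s IH] x hx hX.
  by have -> : x = kzero RK by apply: fext => i; apply: hx.
pose x' : P := fun j => if dec (a = j) then 0 else x j.
have -> : x = kadd RK (emb (x a)) x'.
  apply: fext => j /=; rewrite /x'; case: (dec (a = j)) => [e|n].
    by subst j; rewrite emb_id addr0.
  by rewrite emb_ne // add0r.
apply: XD => //; apply: IH.
- move=> i hi; rewrite /x'; case: (dec (a = i)) => // n.
  by apply: hx => -[//|]; apply: hi.
- move=> i; rewrite /x'; destruct (dec (a = i)); last by [].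
  by rewrite emb0.
Qed.

Lemma notAfin (S : P -> Prop) : ~ Afin S -> forall s, exists i, ~ List.In i s /\ ~ TT S i 1.
Proof.
move=> nA s; apply: NNPP => h; apply: nA; exists s => i hi; apply: NNPP => nT.
by apply: h; exists i.
Qed.

Lemma const_part (S J : P -> Prop) (z : P) : right_ideal (A := RK) S ->
  minimal_over (A := RK) S J -> J z -> ~ inI z -> Afin S.
Proof.
move=> riS [riJ SJ _ minJ] Jz nI; apply: NNPP => nA.
have riS' := riS; case: riS' => Sk S0 SD SZ SM.
have riJ' := riJ; case: riJ' => Jk J0 JD JZ JM.
have [k [s hs]] := Jk _ Jz.
have k0 : k != 0.
  apply/negP => /eqP k0; apply: nI; exists s => i hi; by rewrite hs // k0 scale0r.
have [j1 [j1s nT1]] := notAfin nA s.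
have [j2 [j2s nT2]] := notAfin nA (j1 :: s).
have j12 : j1 <> j2 by move=> e; apply: j2s; left.
have j2s' : ~ List.In j2 s by move=> h; apply: j2s; right.
have riT : forall j, right_ideal (A := alg_kalg (R j)) (TT S j) by move=> j; apply: pull_ideal.
pose w1 := emb (k%:A : R j1).
have ew : forall j, ~ List.In j s -> kmul RK z (emb (1 : R j)) = emb (k%:A : R j).
  by move=> j hj; rewrite emb_comp hs.
have Jw1 : J w1 by rewrite /w1 -ew //; apply: JM => //; apply: kin_emb.
have nSw1 : ~ S w1 by move=> h; apply: nT1; apply: (ri_scale1 (riT j1) k0).
pose L := fun w => exists s0 r, [/\ S s0, kin RK r & w = kadd RK s0 (kmul RK w1 r)].
have riL : right_ideal (A := RK) L.
  split.
  - by move=> w [s0 [r [Ss kr ->]]]; apply: kinD; [apply: Sk | apply: kinM => //; apply: kin_emb].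
  - exists (kzero RK), (kzero RK); split=> //; first exact: kin0.
    by apply: fext => j /=; rewrite mulr0 addr0.
  - move=> w w' [s0 [r [Ss kr ->]]] [s1 [r1 [Ss1 kr1 ->]]].
    exists (kadd RK s0 s1), (kadd RK r r1); split; [exact: SD | exact: kinD |].
    apply: fext => j /=; rewrite mulrDr -!addrA; congr (_ + _); by rewrite addrCA.
  - move=> a w [s0 [r [Ss kr ->]]]; exists (kscale RK a s0), (kscale RK a r); split.
    + exact: SZ. + exact: kinZ. + by apply: fext => j /=; rewrite scalerDr scalerAr.
  - move=> w r' [s0 [r [Ss kr ->]]] kr'; exists (kmul RK s0 r'), (kmul RK r r'); split.
    + exact: SM. + exact: kinM. + by apply: fext => j /=; rewrite mulrDl mulrA.
case: (minJ L riL).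
- by move=> w Sw; exists w, (kzero RK); split=> //; [exact: kin0 | apply: fext => j /=; rewrite mulr0 addr0].
- move=> w [s0 [r [Ss kr ->]]]; apply: JD; [exact: SJ | apply: JM => //].
- by move=> h; apply: nSw1; apply: h; exists (kzero RK), (fun _ => 1); split=> //;
    [exact: kin1 | apply: fext => j /=; rewrite mulr1 add0r].
- move=> h.
  have Jw2 : J (emb (k%:A : R j2)) by rewrite -ew //; apply: JM => //; apply: kin_emb.
  have [s0 [r [Ss kr e]]] := h _ Jw2.
  have : (emb (k%:A : R j2)) j2 = s0 j2 by rewrite e /= /w1 emb_ne // mul0r addr0.
  rewrite emb_id => e2; apply: nT2; apply: (ri_scale1 (riT j2) k0).
  by rewrite e2; apply: TT_comp.
Qed.

Definition vF (F : seq I) : P := fun j => if dec (List.In j F) then 0 else 1.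

Lemma vF_in F j : List.In j F -> vF F j = 0.
Proof. by rewrite /vF; case: dec. Qed.
Lemma vF_out F j : ~ List.In j F -> vF F j = 1.
Proof. by rewrite /vF; case: dec. Qed.
Lemma kin_vF F : kin RK (vF F).
Proof. by exists 1, F => j hj; rewrite vF_out // scale1r. Qed.
Lemma vF_notI F : ~ inI (vF F).
Proof.
move=> [s hs]; have [i hi] := fresh (s ++ F).
have := hs i (fun h => hi (List.in_or_app _ _ _ (or_introl h))).
rewrite vF_out; first by move/eqP; rewrite oner_eq0.
by move=> h; apply: hi; apply: List.in_or_app; right.
Qed.

Definition Vplus (S : P -> Prop) (F : seq I) : P -> Prop :=
  fun w => exists s0 (a : K), S s0 /\ w = kadd RK s0 (kscale RK a (vF F)).

Lemma vmin (S : P -> Prop) (F : seq I) : Inv S -> right_ideal (A := RK) S -> ~ cc S ->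
  (forall i, ~ List.In i F -> TT S i 1) -> minimal_over (A := RK) S (Vplus S F).
Proof.
move=> [_ _ IS] riS ncc hF.
have riS' := riS; case: riS' => Sk S0 SD SZ SM.
have riT : forall j, right_ideal (A := alg_kalg (R j)) (TT S j) by move=> j; apply: pull_ideal.
have nSv : ~ S (vF F).
  by move=> /IS [_ [_ [h|h]]]; [apply: (vF_notI h) | apply: ncc].
split.
- split.
  + by move=> w [s0 [a [Ss ->]]]; apply: kinD; [apply: Sk | apply: kinZ; apply: kin_vF].
  + by exists (kzero RK), 0; split=> //; apply: fext => j /=; rewrite scale0r addr0.
  + move=> w w' [s0 [a [Ss ->]]] [s1 [a1 [Ss1 ->]]].
    exists (kadd RK s0 s1), (a + a1); split; first exact: SD.
    apply: fext => j /=; rewrite scalerDl -!addrA; congr (_ + _); by rewrite addrCA.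
  + move=> b w [s0 [a [Ss ->]]]; exists (kscale RK b s0), (b * a); split; first exact: SZ.
    by apply: fext => j /=; rewrite scalerDr scalerA.
  + move=> w r [s0 [a [Ss ->]]] [b [sr hr]].
    pose d : P := fun j => vF F j * (r j - b%:A).
    have Sd : S d.
      apply/IS; split; last split.
      * have -> : d = kmul RK (vF F) (kadd RK r (kscale RK (-b) (fun _ => 1))).
          by apply: fext => j /=; rewrite /d scaleNr.
        apply: kinM; first exact: kin_vF.
        by apply: kinD => //; [exists b, sr | apply: kinZ; apply: kin1].
      * move=> j; rewrite /d; case: (dec (List.In j F)) => hj.
          by rewrite vF_in // mul0r /TT emb0.
        by apply: (ri_full (riT j)); apply: hF.
      * by left; exists sr => j hj; rewrite /d hr // subrr mulr0.
    exists (kadd RK (kmul RK s0 r) (kscale RK a d)), (a * b); split.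
      by apply: SD; [apply: SM => //; exists b, sr | apply: SZ].
    apply: fext => j /=; rewrite /d mulrDl -addrA; congr (_ + _).
    by rewrite -scalerAl -scalerA -scalerDr mulrBr -scalerAr mulr1 subrK.
- by move=> w Sw; exists w, 0; split=> //; apply: fext => j /=; rewrite scale0r addr0.
- exists (vF F); split=> //; exists (kzero RK), 1; split=> //.
  by apply: fext => j /=; rewrite scale1r add0r.
- move=> J' [J'k J'0 J'D J'Z J'M] SJ' J'V.
  case: (classic (ksubset (A := RK) J' S)) => [h|h]; first by left.
  right; have [w [J'w nSw]] : exists w, J' w /\ ~ S w.
    by apply: NNPP => h'; apply: h => w J'w; apply: NNPP => nS; apply: h'; exists w.
  have [s0 [a [Ss ew]]] := J'V _ J'w.
  have a0 : a != 0.
    apply/negP => /eqP a0; apply: nSw; rewrite ew a0.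
    by have -> : kadd RK s0 (kscale RK 0 (vF F)) = s0 by apply: fext => j /=; rewrite scale0r addr0.
  have J'v : J' (vF F).
    have -> : vF F = kscale RK a^-1 (kadd RK w (kscale RK (-1) s0)).
      apply: fext => j /=; rewrite ew /= scaleN1r addrC addKr scalerA mulVf // scale1r //.
    apply: (J'Z); apply: (J'D) => //; apply: (J'Z); exact: SJ'.
  move=> u [s1 [a1 [Ss1 ->]]]; apply: J'D; [exact: SJ' | exact: J'Z].
Qed.

Definition Qn (S : P -> Prop) (x : P) :=
  [/\ kin RK x, (forall i, socle_next (A := alg_kalg (R i)) (TT S i) (x i)) & (inI x \/ Afin S)].

Lemma next_emb (S : P -> Prop) i (y : R i) : socle_term (A := RK) S ->
  socle_next (A := alg_kalg (R i)) (TT S i) y -> socle_next (A := RK) S (emb y).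
Proof.
move=> stS [t [Tt [l [hl ->]]]].
have riS := Rk_ideal stS.
have [Nk N0 ND NZ NM] := Rk_ideal (socle_termS stS).
rewrite (emb_add t _); apply: (ND); first by apply: Rk_infl.
elim: l hl => [|q l IH] hl /=.
  exact: (eq_ind _ _ N0 _ (esym (emb0 i))).
rewrite /ksum /= -/(ksum _) (emb_add q.2 _); apply: (ND); last first.
  by apply: IH => p hp; apply: hl; right.
have [mq qq] := hl q (or_introl erefl).
exists (kzero RK); split; first by case: riS.
exists [:: (Splus S q.1, emb q.2)]; split.
  move=> p [<-|//] /=; split; first exact: minimal_lift.
  by exists (kzero RK), q.2; split=> //; [case: riS | apply: fext => j /=; rewrite add0r].
by apply: fext => j /=; rewrite add0r addr0.
Qed.

Lemma vN (S : P -> Prop) (F : seq I) : socle_term (A := RK) S -> Inv S ->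
  (forall i, ~ List.In i F -> TT S i 1) -> socle_next (A := RK) S (vF F).
Proof.
move=> stS IS hF; have riS := Rk_ideal stS.
case: (classic (cc S)) => hc.
  apply: Rk_infl; case: IS => _ _ IS; apply/IS; split; [exact: kin_vF | split=> //; last by right].
  move=> j; case: (dec (List.In j F)) => hj; last by rewrite vF_out //; apply: hF.
  by rewrite vF_in // /TT emb0; case: riS.
exists (kzero RK); split; first by case: riS.
exists [:: (Vplus S F, vF F)]; split.
  move=> p [<-|//] /=; split; first exact: vmin.
  by exists (kzero RK), 1; split; [case: riS | apply: fext => j /=; rewrite scale1r add0r].
by apply: fext => j /=; rewrite add0r addr0.
Qed.

Lemma NEXT (S : P -> Prop) : socle_term (A := RK) S -> Inv S ->
  forall x, socle_next (A := RK) S x <-> Qn S x.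
Proof.
move=> stS IS; have riS := Rk_ideal stS.
have IS' := IS; case: IS' => IS1 IS2 IS3.
have riN : forall i, right_ideal (A := alg_kalg (R i)) (socle_next (A := alg_kalg (R i)) (TT S i)).
  by move=> i; apply: ak_ideal; apply: socle_termS.
have Qadd : forall x y, Qn S x -> Qn S y -> Qn S (kadd RK x y).
  move=> x y [kx cx ix] [ky cy iy]; split; first exact: kinD.
    by move=> i; case: (riN i) => _ _ D _ _; apply: D.
  case: ix => [[s hs]|]; last by right.
  case: iy => [[s' hs']|]; last by right.
  left; exists (s ++ s') => i hi /=; rewrite hs ?hs' ?addr0 // => h; apply: hi;
    apply: List.in_or_app; tauto.
have Q0 : Qn S (kzero RK).
  split; [exact: kin0 | by move=> i; case: (riN i) | by left; exists [::]].
split.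
- move=> [y [Sy [l [hl ->]]]]; apply: (Qadd).
    have [ky [Ty Iy]] := (IS3 y).1 Sy; split=> //.
      by move=> i; apply: ak_infl.
    by case: Iy; [left | right; apply: IS2].
  elim: l hl => [|q l IH] hl /=; first exact: Q0.
  apply: (Qadd); last by apply: IH => p hp; apply: hl; right.
  have [mq qq] := hl q (or_introl erefl).
  have [[Jk _ _ _ JM] _ _ _] := mq.
  split; first exact: Jk.
    move=> i; case: (classic (TT S i (q.2 i))) => hT; first by apply: ak_infl.
    have mi := minimal_comp riS mq qq hT.
    exists 0; split; first by case: (pull_ideal i riS).
    exists [:: ((fun y => q.1 (emb y)), q.2 i)]; split.
      move=> p [<-|//] /=; split=> //; rewrite -emb_comp; apply: JM => //; apply: kin_emb.
    by rewrite /ksum /= add0r addr0.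
  case: (classic (inI q.2)) => hI; first by left.
  by right; apply: (const_part riS mq qq hI).
- have [Nk N0 ND NZ NM] := Rk_ideal (socle_termS stS).
  move=> [kx cx ix].
  case: ix => [[s hs]|[F hF]].
    by apply: (decomp N0 ND hs) => i; apply: next_emb.
  have [k [s hs]] := kx.
  pose x' : P := fun j => x j - k *: vF F j.
  have -> : x = kadd RK x' (kscale RK k (vF F)) by apply: fext => j /=; rewrite subrK.
  apply: (ND); last by apply: (NZ); apply: vN.
  apply: (decomp N0 ND (s := s ++ F)).
    move=> j hj; rewrite /x' hs; last by move=> h; apply: hj; apply: List.in_or_app; left.
    by rewrite vF_out ?subrr // => h; apply: hj; apply: List.in_or_app; right.
  move=> j; apply: next_emb => //; rewrite /x'.
  apply: (ri_sub (riN j)) => //; case: (riN j) => _ N0' _ NZ' _; apply: NZ'.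
  case: (dec (List.In j F)) => hj; first by rewrite vF_in.
  by rewrite vF_out //; apply: ak_infl; apply: hF.
Qed.

Lemma Inv_next (S : P -> Prop) : socle_term (A := RK) S -> Inv S ->
  [/\ Inv (socle_next (A := RK) S),
      (forall i, TT (socle_next (A := RK) S) i = socle_next (A := alg_kalg (R i)) (TT S i)) &
      (cc (socle_next (A := RK) S) <-> Afin S)].
Proof.
move=> stS IS; have N := NEXT stS IS.
have TTeq : forall i, TT (socle_next (A := RK) S) i = socle_next (A := alg_kalg (R i)) (TT S i).
  move=> i; apply: pred_ext => y.
    by move=> /N [_ cx _]; move: (cx i); rewrite emb_id.
  exact: next_emb.
have ccEq : cc (socle_next (A := RK) S) <-> Afin S.
  split.
    by move=> [x [/N [_ _ [//|h]] nI]].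
  move=> [F hF]; exists (vF F); split; [exact: vN | exact: vF_notI].
split=> //; split.
- by move=> i; rewrite TTeq; apply: socle_termS; case: IS.
- move=> /ccEq [F hF]; exists F => i hi; apply: Rk_infl; exact: hF.
- move=> x; split.
    move=> /N [kx cx ix]; split=> //; split; first by move=> i; rewrite TTeq.
    by case: ix; [left | right; apply/ccEq].
  move=> [kx [cx ix]]; apply/N; split=> //; first by move=> i; rewrite -TTeq.
  by case: ix; [left | right; apply/ccEq].
Qed.

Lemma Inv0 : Inv (fun x => x = kzero RK).
Proof.
have TTeq : forall i, TT (fun x => x = kzero RK) i = (fun y : R i => y = 0).
  move=> i; apply: pred_ext => y /=.
    by rewrite /TT => h; apply: emb_inj; rewrite emb0; exact: h.
  by move=> ->; rewrite /TT emb0.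
split.
- by move=> i; rewrite TTeq; exact: (@socle_term0 _ (alg_kalg (R i))).
- by move=> [x [-> nI]]; exfalso; apply: nI; exists [::].
- move=> x; split.
    move=> ->; split; first exact: kin0.
    by split; [move=> i; rewrite TTeq | left; exists [::]].
  move=> [_ [cx _]]; apply: fext => i; by move: (cx i); rewrite TTeq.
Qed.

Lemma Inv_union (J : Type) (f : J -> P -> Prop) : inhabited J ->
  (forall j, socle_term (A := RK) (f j)) -> (forall j, Inv (f j)) ->
  Inv (fun x => exists j, f j x).
Proof.
move=> [j00] stf IH.
have mono : forall j j' i y, ksubset (A := RK) (f j) (f j') -> TT (f j) i y -> TT (f j') i y.
  by move=> j j' i y h; apply: h.
split.
- move=> i; change (socle_term (A := alg_kalg (R i)) (fun y => exists j, TT (f j) i y)).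
  apply: socle_termU; first by constructor.
  by move=> j; case: (IH j).
- move=> [x [[j fx] nI]]; case: (IH j) => _ h _.
  have [F hF] := h (ex_intro _ x (conj fx nI)).
  by exists F => i hi; exists j; apply: hF.
- move=> x; split.
    move=> [j fx]; case: (IH j) => _ _ h; have [kx [cx ix]] := (h x).1 fx.
    split=> //; split; first by move=> i; exists j; apply: cx.
    by case: ix => [hI|[x0 [f0 n0]]]; [left | right; exists x0; split=> //; exists j].
  move=> [kx [cx ix]].
  have common : forall (L : seq I) j0, exists j, ksubset (A := RK) (f j0) (f j) /\
      forall i, List.In i L -> TT (f j) i (x i).
    elim=> [|a L IHL] j0; first by exists j0; split=> // i [].
    have [j1 [h01 h1]] := IHL j0.
    have [j2 h2] := cx a.
    case: (Rk_chain (stf j1) (stf j2)) => h12.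
    + exists j2; split; first by move=> z /h01 /h12.
      by move=> i [<-|iL] //; apply: h12; apply: h1.
    + exists j1; split=> //.
      by move=> i [<-|iL]; [apply: h12 | apply: h1].
  case: ix => [[s hs]|[x0 [[j0 f0] n0]]].
    have [j [_ hj]] := common s j00; exists j.
    case: (IH j) => _ _ h; apply/h; split=> //; split; last by left; exists s.
    move=> i; case: (classic (List.In i s)) => hi; first by apply: hj.
    by rewrite hs // /TT emb0; apply: Rk_st0.
  case: (IH j0) => _ hA0 _.
  have [F hF] := hA0 (ex_intro _ x0 (conj f0 n0)).
  have [k [s hs]] := kx.
  have [j [h0j hj]] := common (s ++ F) j0; exists j.
  case: (IH j) => IHj1 _ h; apply/h; split=> //; split; last first.
    by right; exists x0; split=> //; apply: h0j.
  move=> i; case: (classic (List.In i (s ++ F))) => hi; first by apply: hj.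
  rewrite hs; last by move=> h'; apply: hi; apply: List.in_or_app; left.
  have riT := ak_ideal (IHj1 i).
  apply: (ri_full riT); apply: (mono j0) => //; apply: hF.
  by move=> h'; apply: hi; apply: List.in_or_app; right.
Qed.

Lemma Inv_all (S : P -> Prop) : socle_term (A := RK) S -> Inv S.
Proof.
elim=> {S} [| S stS IH | J f inh stf IH].
- exact: Inv0.
- by case: (Inv_next stS IH).
- exact: Inv_union.
Qed.

Definition Ustar : P -> Prop :=
  fun x => exists S : {S : P -> Prop | socle_term (A := RK) S}, sval S x.

Lemma Ustar_st : socle_term (A := RK) Ustar.
Proof.
apply: socle_termU; first by constructor; exists (fun x => x = kzero RK); exact: socle_term0.
by move=> [S hS].
Qed.

Lemma Ustar_fix : socle_next (A := RK) Ustar = Ustar.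
Proof.
apply: pred_ext => x; last by apply: Rk_infl.
by move=> h; exists (exist _ _ (socle_termS Ustar_st)).
Qed.

Hypothesis semi : forall i, semiartinian (alg_kalg (R i)).

Lemma Ustar_full x : Ustar x <-> kin RK x.
Proof.
have IU := Inv_all Ustar_st.
have [_ TTeq ccEq] := Inv_next Ustar_st IU.
have full : forall i y, TT Ustar i y.
  move=> i y; have [Sf [stf hf]] := semi i.
  have fx : ksubset (A := alg_kalg (R i)) (socle_next (A := alg_kalg (R i)) (TT Ustar i)) (TT Ustar i).
    by rewrite -TTeq Ustar_fix.
  have st1 : socle_term (A := alg_kalg (R i)) (TT Ustar i) by case: IU.
  have := ak_fix st1 fx stf; apply; exact/hf.
have ccU : cc Ustar by rewrite -{1}Ustar_fix; apply/ccEq; exists [::] => i _; apply: full.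
case: IU => _ _ h; split.
  by move=> /h [].
by move=> kx; apply/h; split=> //; split; [move=> i; apply: full | right].
Qed.

Lemma exS0 S : socle_term (A := RK) S -> cc S ->
  exists S0, [/\ socle_term (A := RK) S0, ~ cc S0 & Afin S0].
Proof.
elim=> {S} [| S stS IH | J f inh stf IH].
- by move=> [x [-> nI]]; exfalso; apply: nI; exists [::].
- case: (classic (cc S)) => hc; first by move=> _; apply: IH.
  move=> hn; exists S; split=> //.
  by have [_ _ ccEq] := Inv_next stS (Inv_all stS); apply/ccEq.
- by move=> [x [[j fx] nI]]; apply: (IH j); exists x.
Qed.

Lemma findF : exists F : seq I, forall S, socle_term (A := RK) S -> cc S ->
  forall i, ~ List.In i F -> TT S i 1.
Proof.
have ccU : cc Ustar.
  by exists (vF [::]); split; [apply/Ustar_full; apply: kin_vF | apply: vF_notI].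
have [S0 [st0 nc0 [F hF]]] := exS0 Ustar_st ccU.
exists F => S stS ccS i hi.
case: (Rk_chain stS st0) => h.
  by exfalso; apply: nc0; case: ccS => x [Sx nI]; exists x; split=> //; apply: h.
by apply: h; apply: hF.
Qed.

Local Notation lin A l := (ksum (A := A) (map (fun p => kscale A p.1 p.2) l)).

Lemma Rk_ksum_cat (l l' : seq P) : ksum (A := RK) (l ++ l') = kadd RK (ksum (A := RK) l) (ksum (A := RK) l').
Proof.
apply: (ksum_cat (A := RK)).
- exact: Rk_add0.
- by move=> x y z; apply: fext => i /=; rewrite addrA.
- by move=> x y; apply: fext => i /=; rewrite addrC.
Qed.

Lemma span_sub (X Y : P -> Prop) : Y (kzero RK) ->
  (forall a b, Y a -> Y b -> Y (kadd RK a b)) -> (forall k a, Y a -> Y (kscale RK k a)) ->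
  (forall b, X b -> Y b) -> forall x, kspan (A := RK) X x -> Y x.
Proof.
move=> Y0 YD YZ XY x [l [hl ->]]; elim: l hl => [|q l IH] hl //=.
apply: YD; first by apply: YZ; apply: XY; apply: hl; left.
by apply: IH => p hp; apply: hl; right.
Qed.

Lemma span0 (X : P -> Prop) : kspan (A := RK) X (kzero RK).
Proof. by exists [::]. Qed.

Lemma spanD (X : P -> Prop) a b : kspan (A := RK) X a -> kspan (A := RK) X b ->
  kspan (A := RK) X (kadd RK a b).
Proof.
move=> [l [hl ->]] [l' [hl' ->]]; exists (l ++ l'); split.
  by move=> p hp; case: (List.in_app_or _ _ _ hp) => ?; [apply: hl | apply: hl'].
by rewrite map_cat Rk_ksum_cat.
Qed.

Lemma spanZ (X : P -> Prop) k a : kspan (A := RK) X a -> kspan (A := RK) X (kscale RK k a).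
Proof.
move=> [l [hl ->]]; exists (map (fun p => (k * p.1, p.2)) l); split.
  move=> p; elim: l hl => [|q l IH] hl //= [<-|hp] /=; first by apply: hl; left.
  by apply: IH => // r hr; apply: hl; right.
elim: l {hl} => [|q l IH] /=; first by apply: fext => i /=; rewrite scaler0.
rewrite -IH; apply: fext => i /=; by rewrite scalerDr scalerA.
Qed.

Lemma spanE (X : P -> Prop) b : X b -> kspan (A := RK) X b.
Proof.
move=> Xb; exists [:: (1, b)]; split; first by move=> p [<-|//].
by apply: fext => i /=; rewrite scale1r addr0.
Qed.

Lemma span_mono (X X' : P -> Prop) x : (forall b, X b -> X' b) -> kspan (A := RK) X x -> kspan (A := RK) X' x.
Proof. by move=> h [l [hl ->]]; exists l; split=> // p /hl /h. Qed.

Lemma span_emb_gen (Y : P -> Prop) i (X : R i -> Prop) : Y (kzero RK) ->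
  (forall a b, Y a -> Y b -> Y (kadd RK a b)) -> (forall k a, Y a -> Y (kscale RK k a)) ->
  (forall b, X b -> Y (emb b)) -> forall y, kspan (A := alg_kalg (R i)) X y -> Y (emb y).
Proof.
move=> Y0 YD YZ XY y [l [hl ->]]; elim: l hl => [|q l IH] hl /=.
  by rewrite (emb0 i).
rewrite (emb_add _ _) (emb_scale _ _); apply: YD; first by apply: YZ; apply: XY; apply: hl; left.
by apply: IH => p hp; apply: hl; right.
Qed.

Lemma indep_mono (X X' : P -> Prop) : kindependent (A := RK) X -> (forall b, X' b -> X b) ->
  kindependent (A := RK) X'.
Proof. by move=> h h' l nd hl e; apply: h => // p /hl /h'. Qed.

Lemma ak_lin i (l : seq (K * R i)) :
  lin (alg_kalg (R i)) l = foldr (fun p acc => p.1 *: p.2 + acc) 0 l.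
Proof. by elim: l => [|q l IH] //=; rewrite -IH. Qed.

Lemma one_indep i : kindependent (A := alg_kalg (R i)) (fun b => b = 1).
Proof.
case=> [|q l] nd hl e p hp; first by [].
have l0 : l = [::].
  case: l nd hl {e hp} => [//|q' l] /= nd hl.
  have := hl q (or_introl erefl); have := hl q' (or_intror (or_introl erefl)).
  move=> e1 e2; move: nd; rewrite -/(map _ _) => /List.NoDup_cons_iff [h _]; exfalso; apply: h.
  by rewrite e1 e2; left.
subst l; case: hp => [<-|//]; move: e; rewrite ak_lin /= addr0 (hl q (or_introl erefl)).
by move/eqP; rewrite scaler_eq0 oner_eq0 orbF => /eqP.
Qed.

Lemma indep_nz i (X : R i -> Prop) b : kindependent (A := alg_kalg (R i)) X -> X b -> b != 0.
Proof.
move=> h Xb; apply/negP => /eqP b0.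
have := h [:: (1, b)] _ _ _ (1, b) (or_introl erefl).
have -> : (1, b).1 = (1 : K) by [].
move=> /(_ _ _ _) H; have : (1 : K) = 0.
  apply: H.
  - by constructor; [move=> [] | constructor].
  - by move=> p [<-|//].
  - by rewrite ak_lin /= b0 scaler0 addr0.
by move/eqP; rewrite oner_eq0.
Qed.

Definition extr (Q : P -> Prop) i (h : P -> R i) (l : seq (K * P)) : seq (K * R i) :=
  foldr (fun q acc => if dec (Q q.2) then (q.1, h q.2) :: acc else acc) [::] l.

Lemma extr_in (Q : P -> Prop) i (h : P -> R i) l q :
  List.In q l -> Q q.2 -> List.In (q.1, h q.2) (extr Q h l).
Proof.
elim: l => [|q' l IH] //= [e|hq] Qq.
  by subst q'; destruct (dec (Q q.2)) as [a|a]; [left|].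
by destruct (dec (Q q'.2)) as [a|a]; [right|]; apply: IH.
Qed.

Lemma extr_in' (Q : P -> Prop) i (h : P -> R i) l p :
  List.In p (extr Q h l) -> exists q, [/\ List.In q l, Q q.2 & p = (q.1, h q.2)].
Proof.
elim: l => [|q' l IH] //=.
case: (dec (Q q'.2)) => hq.
  move=> [<-|hp]; first by exists q'; split=> //; left.
  by have [q [? ? ?]] := IH hp; exists q; split=> //; right.
by move=> hp; have [q [? ? ?]] := IH hp; exists q; split=> //; right.
Qed.

Lemma in_map_snd (A B : Type) (l : seq (A * B)) x :
  List.In x (map snd l) -> exists p, List.In p l /\ p.2 = x.
Proof.
elim: l => [|p l IH] //= [<-|h]; first by exists p; split=> //; left.
by have [p' [? ?]] := IH h; exists p'; split=> //; right.
Qed.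

Lemma in_map_snd' (A B : Type) (l : seq (A * B)) p :
  List.In p l -> List.In p.2 (map snd l).
Proof. by elim: l => [|q l IH] //= [<-|h]; [left | right; apply: IH]. Qed.

Lemma extract (i : I) (Bi : R i -> Prop) (Q : P -> Prop) (h : P -> R i) (l : seq (K * P)) :
  kindependent (A := alg_kalg (R i)) Bi ->
  List.NoDup (map snd l) ->
  (forall q, List.In q l -> Q q.2 -> Bi (h q.2)) ->
  (forall q q', List.In q l -> List.In q' l -> Q q.2 -> Q q'.2 -> h q.2 = h q'.2 -> q.2 = q'.2) ->
  (forall q, List.In q l -> Q q.2 -> q.2 i = h q.2) ->
  (forall q, List.In q l -> ~ Q q.2 -> q.1 *: q.2 i = 0) ->
  lin RK l = kzero RK ->
  forall q, List.In q l -> Q q.2 -> q.1 = 0.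
Proof.
move=> hind nd hB hinj hQ hnQ e.
have sum : lin (alg_kalg (R i)) (extr Q h l) = (lin RK l) i.
  elim: l nd hB hinj hQ hnQ {e} => [|q l IH] nd hB hinj hQ hnQ //=.
  have IH' := IH (proj1 (List.NoDup_cons_iff _ _) nd).2
     (fun q' hq => hB q' (or_intror hq))
     (fun q1 q2 h1 h2 => hinj q1 q2 (or_intror h1) (or_intror h2))
     (fun q' hq => hQ q' (or_intror hq)) (fun q' hq => hnQ q' (or_intror hq)).
  case: (dec (Q q.2)) => hq /=.
    by rewrite -IH' (hQ q (or_introl erefl) hq).
  by rewrite (hnQ q (or_introl erefl) hq) add0r -IH'.
have ndE : List.NoDup (map snd (extr Q h l)).
  elim: l nd hB hinj hQ hnQ {e sum} => [|q l IH] nd hB hinj hQ hnQ /=.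
    by constructor.
  have [nq nd'] := proj1 (List.NoDup_cons_iff _ _) nd.
  have IH' := IH nd' (fun q' hq => hB q' (or_intror hq))
     (fun q1 q2 h1 h2 => hinj q1 q2 (or_intror h1) (or_intror h2))
     (fun q' hq => hQ q' (or_intror hq)) (fun q' hq => hnQ q' (or_intror hq)).
  case: (dec (Q q.2)) => hq //=; constructor=> //.
  move=> hin; have [p [hp hh]] := in_map_snd hin.
  have [q' [q'l Qq' ep]] := extr_in' hp; subst p; move: hh => /= hh.
  apply: nq; rewrite (hinj q q' (or_introl erefl) (or_intror q'l) hq Qq' (esym hh)).
  exact: in_map_snd'.
move=> q ql Qq.
have := hind (extr Q h l) ndE _ _ (q.1, h q.2) (extr_in h ql Qq); apply.
- by move=> p hp; have [q' [q'l Qq' ->]] := extr_in' hp; apply: hB.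
- by rewrite sum e.
Qed.

Lemma conormed_of (B : P -> Prop) : (forall x, B x -> kin RK x) -> kindependent (A := RK) B ->
  (forall S, socle_term (A := RK) S -> forall x, S x -> kspan (A := RK) (fun b => B b /\ S b) x) ->
  conormed (A := RK) B.
Proof.
move=> Bk Bind BS.
have spK : forall x, kspan (A := RK) B x -> kin RK x.
  apply: span_sub => //; [exact: kin0 | exact: kinD | exact: kinZ].
split.
  split=> // x; split; last exact: spK.
  move=> /Ustar_full /(BS _ Ustar_st); apply: span_mono => b [].
  by [].
move=> S stS; exists (fun b => B b /\ S b); split; first by move=> b [].
have [Sk S0 SD SZ _] := Rk_ideal stS.
split.
- by move=> b [].
- by apply: indep_mono Bind _ => b [].
- move=> x; split; first exact: BS.
  by apply: span_sub => // b [].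
Qed.

Section WithF.
Variable F : seq I.
Hypothesis hF : forall S, socle_term (A := RK) S -> cc S -> forall i, ~ List.In i F -> TT S i 1.

Lemma S_in_Y (S Y : P -> Prop) : socle_term (A := RK) S -> Y (kzero RK) ->
  (forall a b, Y a -> Y b -> Y (kadd RK a b)) -> (forall k a, Y a -> Y (kscale RK k a)) ->
  (forall i y, TT S i y -> Y (emb y)) -> (cc S -> Y (vF F)) -> forall x, S x -> Y x.
Proof.
move=> stS Y0 YD YZ hT hv x Sx.
have [IS1 _ IS3] := Inv_all stS.
have [kx [cx ix]] := (IS3 x).1 Sx.
case: ix => [[s hs]|hc].
  by apply: (decomp Y0 YD hs) => i; apply: hT.
have [k [s hs]] := kx.
pose x' : P := fun j => x j - k *: vF F j.
have -> : x = kadd RK x' (kscale RK k (vF F)) by apply: fext => j /=; rewrite subrK.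
apply: (YD); last by apply: (YZ); apply: hv.
apply: (decomp Y0 YD (s := s ++ F)).
  move=> j hj; rewrite /x' hs; last by move=> h; apply: hj; apply: List.in_or_app; left.
  by rewrite vF_out ?subrr // => h; apply: hj; apply: List.in_or_app; right.
move=> j; apply: hT; rewrite /x'.
have riT := ak_ideal (IS1 j).
apply: (ri_sub riT) => //; case: riT => _ T0 _ TZ _; apply: TZ.
case: (dec (List.In j F)) => hj; first by rewrite vF_in.
by rewrite vF_out //; apply: hF.
Qed.

Lemma vF_S (S : P -> Prop) : socle_term (A := RK) S -> cc S -> S (vF F).
Proof.
move=> stS hc; have [IS1 _ IS3] := Inv_all stS.
apply/IS3; split; first exact: kin_vF.
split; last by right.
move=> j; case: (dec (List.In j F)) => hj; last by rewrite vF_out //; apply: hF.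
by rewrite vF_in // /TT emb0; apply: Rk_st0.
Qed.

Lemma emb_uniq i j (Bi : R i -> Prop) (b : R i) (b' : R j) :
  kindependent (A := alg_kalg (R i)) Bi -> Bi b -> emb b = emb b' -> i = j.
Proof.
move=> hi hb e; apply: NNPP => n.
have := congr1 (fun x : P => x i) e; rewrite /= emb_id emb_ne; last by move=> h; apply: n.
by move/eqP; apply/negP; apply: indep_nz hb.
Qed.

Local Unset Implicit Arguments.
Variable Bc : forall i, R i -> Prop.
Local Set Implicit Arguments.
Hypothesis hBc : forall i, conormed (A := alg_kalg (R i)) (Bc i) /\ Defs.multiplicative (A := alg_kalg (R i)) (Bc i).

Lemma Bc_ind i : kindependent (A := alg_kalg (R i)) (Bc i).
Proof. by case: (hBc i) => [[[_ h _] _] _]. Qed.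

Definition BA (x : P) := (exists i (b : R i), Bc i b /\ x = emb b) \/ x = vF F.

Lemma BA_kin x : BA x -> kin RK x.
Proof. by case=> [[i [b [_ ->]]]|->]; [apply: kin_emb | apply: kin_vF]. Qed.

Lemma idx_list (l : seq (K * P)) : exists L : seq I, forall q, List.In q l ->
  forall j (b : R j), Bc j b -> q.2 = emb b -> List.In j L.
Proof.
elim: l => [|q l [L hL]]; first by exists [::].
case: (classic (exists j (b : R j), Bc j b /\ q.2 = emb b)) => [[j [b [hb e]]]|n].
  exists (j :: L) => q' [<-|hq] j' b' hb' e'.
    by left; apply: (emb_uniq (b' := b') (@Bc_ind j) hb); rewrite -e -e'.
  by right; apply: hL hq _ _ hb' e'.
exists L => q' [<-|hq] j' b' hb' e'; last by apply: hL hq _ _ hb' e'.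
by exfalso; apply: n; exists j', b'.
Qed.

Lemma BA_indep : kindependent (A := RK) BA.
Proof.
move=> l nd hl e.
have [L hL] := idx_list l.
have [i hi] := fresh (F ++ L).
have hv : forall q, List.In q l -> q.2 = vF F -> q.1 = 0.
  apply: (extract (i := i) (Q := fun x => x = vF F) (h := fun _ => 1) (@one_indep i) nd) => //.
  - by move=> q q' _ _ -> ->.
  - by move=> q _ ->; rewrite vF_out // => h; apply: hi; apply: List.in_or_app; left.
  - move=> q hq nv; case: (hl q hq) => [[j [b [hb eb]]]|//].
    rewrite eb emb_ne ?scaler0 // => eji; subst j.
    by apply: hi; apply: List.in_or_app; right; apply: (hL q hq _ b).
have hE : forall i (b : R i) q, List.In q l -> Bc i b -> q.2 = emb b -> q.1 = 0.
  move=> j b q hq hb eq.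
  apply: (extract (i := j) (Bi := Bc j) (Q := fun x => exists b, Bc j b /\ x = emb b)
     (h := fun x => x j) (@Bc_ind j) nd) => //; last by exists b.
  - by move=> q' _ [b' [hb' ->]]; rewrite emb_id.
  - by move=> q1 q2 _ _ [b1 [_ ->]] [b2 [_ ->]]; rewrite !emb_id => ->.
  - move=> q' hq' nQ; case: (hl q' hq') => [[j' [b' [hb' eb']]]|ev].
      rewrite eb' emb_ne ?scaler0 // => ejj; subst j'.
      by apply: nQ; exists b'.
    by rewrite (hv q' hq' ev) scale0r.
move=> p hp; case: (hl p hp) => [[j [b [hb eb]]]|ev].
  exact: (hE j b).
exact: hv.
Qed.

Lemma BA_conormed : conormed (A := RK) BA.
Proof.
apply: conormed_of; [exact: BA_kin | exact: BA_indep |].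
move=> S stS; have [Sk S0 SD SZ _] := Rk_ideal stS.
have [IS1 _ _] := Inv_all stS.
apply: (S_in_Y stS); [exact: span0 | exact: spanD | exact: spanZ | |].
- move=> i y hy; have [B'' [sB [sBT _ hB'']]] := (proj2 (proj1 (hBc i))) _ (IS1 i).
  apply: (span_emb_gen (X := B'')); [exact: span0 | exact: spanD | exact: spanZ | |].
    move=> b hb; apply: spanE; split; first by left; exists i, b; split=> //; apply: sB.
    exact: sBT.
  by apply/hB''.
- by move=> hc; apply: spanE; split; [right | apply: vF_S].
Qed.

Lemma RmulDl (a b c : P) : kmul RK (kadd RK a b) c = kadd RK (kmul RK a c) (kmul RK b c).
Proof. by apply: fext => j /=; rewrite mulrDl. Qed.
Lemma RmulDr (a b c : P) : kmul RK a (kadd RK b c) = kadd RK (kmul RK a b) (kmul RK a c).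
Proof. by apply: fext => j /=; rewrite mulrDr. Qed.
Lemma Radd0l (a : P) : kadd RK (kzero RK) a = a.
Proof. by apply: fext => j /=; rewrite add0r. Qed.
Lemma Radd0r (a : P) : kadd RK a (kzero RK) = a.
Proof. exact: Rk_add0. Qed.

Lemma emb_mul_same i (b b' : R i) : kmul RK (emb b) (emb b') = emb (b * b').
Proof. by rewrite mul_emb_r emb_id. Qed.
Lemma emb_mul_ne i j (b : R i) (b' : R j) : i <> j -> kmul RK (emb b) (emb b') = kzero RK.
Proof. by move=> n; rewrite mul_emb_r emb_ne // mul0r emb0. Qed.
Lemma emb_vF_in i (b : R i) : List.In i F -> kmul RK (emb b) (vF F) = kzero RK.
Proof. by move=> h; rewrite mul_emb_l vF_in // mulr0 emb0. Qed.
Lemma emb_vF_out i (b : R i) : ~ List.In i F -> kmul RK (emb b) (vF F) = emb b.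
Proof. by move=> h; rewrite mul_emb_l vF_out // mulr1. Qed.
Lemma vF_emb_in i (b : R i) : List.In i F -> kmul RK (vF F) (emb b) = kzero RK.
Proof. by move=> h; rewrite mul_emb_r vF_in // mul0r emb0. Qed.
Lemma vF_emb_out i (b : R i) : ~ List.In i F -> kmul RK (vF F) (emb b) = emb b.
Proof. by move=> h; rewrite mul_emb_r vF_out // mul1r. Qed.
Lemma vF_vF : kmul RK (vF F) (vF F) = vF F.
Proof.
apply: fext => j /=; case: (dec (List.In j F)) => h.
  by rewrite vF_in // mulr0.
by rewrite vF_out // mulr1.
Qed.

Lemma BA_mult : Defs.multiplicative (A := RK) BA.
Proof.
move=> x y [[i [b [hb ->]]]|->] [[j [b' [hb' ->]]]|->].
- case: (dec (i = j)) => [eij|nij]; last by left; apply: emb_mul_ne.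
  subst j; rewrite emb_mul_same; case: ((proj2 (hBc i)) b b' hb hb') => h.
    by left; rewrite (_ : b * b' = 0) ?emb0 //; exact: h.
  by right; left; exists i, (b * b').
- case: (dec (List.In i F)) => h; first by left; apply: emb_vF_in.
  by right; left; exists i, b; split=> //; apply: emb_vF_out.
- case: (dec (List.In j F)) => h; first by left; apply: vF_emb_in.
  by right; left; exists j, b'; split=> //; apply: vF_emb_out.
- by right; right; apply: vF_vF.
Qed.

Lemma TT0 i : TT (fun x => x = kzero RK) i = (fun y : R i => y = 0).
Proof.
apply: pred_ext => y /=.
  by rewrite /TT => h; apply: emb_inj; rewrite emb0; exact: h.
by move=> ->; rewrite /TT emb0.
Qed.

Lemma soc1_in (S : P -> Prop) i (y : R i) : socle_term (A := RK) S ->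
  ~ (forall x, S x -> x = kzero RK) ->
  socle_next (A := alg_kalg (R i)) (fun x => x = 0) y -> S (emb y).
Proof.
move=> stS nz hy.
have st0' : socle_term (A := RK) (fun x => x = kzero RK) by exact: socle_term0.
have sub0 : ksubset (A := RK) (fun x => x = kzero RK) S by move=> x ->; apply: Rk_st0.
have h := Rk_L2 stS st0' sub0 (fun h => nz h).
apply: h; have [_ TTeq _] := Inv_next st0' Inv0.
have h2 : TT (socle_next (A := RK) (fun x => x = kzero RK)) i y by rewrite (TTeq i) TT0.
exact: h2.
Qed.

Variables (i0 : I) (B0 : R i0 -> Prop) (e : R i0).
Hypothesis hB0 : conormed (A := alg_kalg (R i0)) B0.
Hypothesis sB0 : strong_multiplicative (A := alg_kalg (R i0)) B0.
Hypothesis B0e : B0 e.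
Hypothesis ee : e * e = e.
Hypothesis e_soc : socle_next (A := alg_kalg (R i0)) (fun x => x = 0) e.
Hypothesis i0F : List.In i0 F.

Local Notation E := (emb (i := i0) e).

Definition BS (x : P) :=
  [\/ exists b, B0 b /\ x = emb (i := i0) b,
      exists i (c : R i), [/\ i <> i0, Bc i c & x = kadd RK (emb c) E] |
      x = kadd RK (vF F) E].

Lemma BS_kin x : BS x -> kin RK x.
Proof.
case=> [[b [_ ->]]|[i [c [_ _ ->]]]|->]; first exact: kin_emb.
  by apply: kinD; apply: kin_emb.
by apply: kinD; [apply: kin_vF | apply: kin_emb].
Qed.

Lemma BS_strong : strong_multiplicative (A := RK) BS.
Proof.
have B0ee : B0 (e * e) by rewrite ee.
move=> x y [[b [hb ->]]|[i [c [ni hc ->]]]|->] [[b' [hb' ->]]|[j [c' [nj hc' ->]]]|->].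
- by constructor 1; exists (b * b'); split; [apply: sB0 | apply: emb_mul_same].
- constructor 1; exists (b * e); split; first by apply: sB0.
  by rewrite RmulDr (emb_mul_ne _ _ (fun h => nj (esym h))) Radd0l emb_mul_same.
- constructor 1; exists (b * e); split; first by apply: sB0.
  by rewrite RmulDr (emb_vF_in b i0F) Radd0l emb_mul_same.
- constructor 1; exists (e * b'); split; first by apply: sB0.
  by rewrite RmulDl emb_mul_ne // Radd0l emb_mul_same.
- rewrite RmulDl !RmulDr (emb_mul_ne _ _ ni) (emb_mul_ne _ _ (fun h => nj (esym h))) Radd0r Radd0l.
  rewrite !emb_mul_same ee.
  case: (dec (i = j)) => [eij|nij]; last first.
    by rewrite emb_mul_ne // Radd0l; constructor 1; exists e.
  subst j; rewrite emb_mul_same; case: ((proj2 (hBc i)) c c' hc hc') => h.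
    by rewrite (_ : c * c' = 0) ?emb0 ?Radd0l; [constructor 1; exists e | exact: h].
  by constructor 2; exists i, (c * c').
- rewrite RmulDl !RmulDr (emb_mul_ne _ _ ni) (emb_vF_in e i0F) Radd0r Radd0l emb_mul_same ee.
  case: (dec (List.In i F)) => h.
    by rewrite emb_vF_in // Radd0l; constructor 1; exists e.
  by rewrite emb_vF_out //; constructor 2; exists i, c.
- constructor 1; exists (e * b'); split; first by apply: sB0.
  by rewrite RmulDl (vF_emb_in b' i0F) Radd0l emb_mul_same.
- rewrite RmulDl !RmulDr (emb_mul_ne _ _ (fun h => nj (esym h))) (vF_emb_in e i0F) Radd0r Radd0l emb_mul_same ee.
  case: (dec (List.In j F)) => h.
    by rewrite vF_emb_in // Radd0l; constructor 1; exists e.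
  by rewrite vF_emb_out //; constructor 2; exists j, c'.
- rewrite RmulDl !RmulDr vF_vF (vF_emb_in e i0F) (emb_vF_in e i0F) emb_mul_same ee Radd0r Radd0l.
  by constructor 3.
Qed.

Lemma B0_ind : kindependent (A := alg_kalg (R i0)) B0.
Proof. by case: hB0 => [[_ h _] _]. Qed.

Lemma addE_inj (a b : P) : kadd RK a E = kadd RK b E -> a = b.
Proof.
move=> h; apply: fext => j; have := congr1 (fun x : P => x j) h => /= /addIr //.
Qed.

Lemma E_comp (b : R i0) j : j <> i0 -> emb b j = 0.
Proof. by move=> n; rewrite emb_ne // => h; apply: n. Qed.

Lemma idx_list2 (l : seq (K * P)) : exists L : seq I, forall q, List.In q l ->
  forall j (c : R j), Bc j c -> q.2 = kadd RK (emb c) E -> List.In j L.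
Proof.
elim: l => [|q l [L hL]]; first by exists [::].
case: (classic (exists j (c : R j), Bc j c /\ q.2 = kadd RK (emb c) E)) => [[j [c [hc ec]]]|n].
  exists (j :: L) => q' [<-|hq] j' c' hc' e'.
    left; apply: (emb_uniq (b' := c') (@Bc_ind j) hc); apply: addE_inj; by rewrite -ec -e'.
  by right; apply: hL hq _ _ hc' e'.
exists L => q' [<-|hq] j' c' hc' e'; last by apply: hL hq _ _ hc' e'.
by exfalso; apply: n; exists j', c'.
Qed.

Lemma BS_indep : kindependent (A := RK) BS.
Proof.
move=> l nd hl e0.
have [L hL] := idx_list2 l.
have [i hi] := fresh (F ++ L).
have hiF : ~ List.In i F by move=> h; apply: hi; apply: List.in_or_app; left.
have ii0 : i <> i0 by move=> h; subst i.
have hv : forall q, List.In q l -> q.2 = kadd RK (vF F) E -> q.1 = 0.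
  apply: (extract (i := i) (Q := fun x => x = kadd RK (vF F) E) (h := fun _ => 1) (@one_indep i) nd) => //.
  - by move=> q q' _ _ -> ->.
  - by move=> q _ -> /=; rewrite vF_out // E_comp // addr0.
  - move=> q hq nv; case: (hl q hq) => [[b [hb ->]]|[j [c [nj hc ec]]]|//].
      by rewrite E_comp // scaler0.
    rewrite ec /= E_comp // addr0.
    case: (dec (j = i)) => eji; last by rewrite emb_ne // scaler0.
    subst j; exfalso; apply: hi; apply: List.in_or_app; right; exact: (hL q hq _ c hc ec).
have h2 : forall j (c : R j) q, List.In q l -> j <> i0 -> Bc j c -> q.2 = kadd RK (emb c) E -> q.1 = 0.
  move=> j c q hq nj hc eq.
  apply: (extract (i := j) (Bi := Bc j) (Q := fun x => exists c, Bc j c /\ x = kadd RK (emb c) E)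
     (h := fun x => x j) (@Bc_ind j) nd) => //; last by exists c.
  - by move=> q' _ [c' [hc' ->]] /=; rewrite emb_id E_comp // addr0.
  - move=> q1 q2 _ _ [c1 [_ ->]] [c2 [_ ->]] /=; rewrite !emb_id !E_comp // !addr0 => ->.
    by [].
  - move=> q' hq' nQ; case: (hl q' hq') => [[b [hb ->]]|[j' [c' [nj' hc' ec']]]|ev].
    + by rewrite E_comp // scaler0.
    + rewrite ec' /= E_comp // addr0.
      case: (dec (j' = j)) => ejj; last by rewrite emb_ne // scaler0.
      by subst j'; exfalso; apply: nQ; exists c'.
    + by rewrite (hv q' hq' ev) scale0r.
have h1 : forall q, List.In q l -> forall b, B0 b -> q.2 = emb (i := i0) b -> q.1 = 0.
  move=> q hq b hb eq.
  apply: (extract (i := i0) (Bi := B0) (Q := fun x => exists b, B0 b /\ x = emb (i := i0) b)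
     (h := fun x => x i0) B0_ind nd) => //; last by exists b.
  - by move=> q' _ [b' [hb' ->]]; rewrite emb_id.
  - by move=> q1 q2 _ _ [b1 [_ ->]] [b2 [_ ->]]; rewrite !emb_id => ->.
  - move=> q' hq' nQ; case: (hl q' hq') => [[b' [hb' eb']]|[j' [c' [nj' hc' ec']]]|ev].
    + by exfalso; apply: nQ; exists b'.
    + by rewrite (h2 j' c' q' hq' nj' hc' ec') scale0r.
    + by rewrite (hv q' hq' ev) scale0r.
move=> p hp; case: (hl p hp) => [[b [hb eb]]|[j [c [nj hc ec]]]|ev].
- exact: (h1 p hp b).
- exact: (h2 j c).
- exact: hv.
Qed.

Lemma BS_conormed : conormed (A := RK) BS.
Proof.
apply: conormed_of; [exact: BS_kin | exact: BS_indep |].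
move=> S stS; have riS := Rk_ideal stS; have [Sk S0 SD SZ _] := riS.
have [IS1 _ _] := Inv_all stS.
case: (classic (forall x, S x -> x = kzero RK)) => [h0|nz].
  by move=> x /h0 ->; apply: span0.
have SE : S E by apply: soc1_in.
have YE : kspan (A := RK) (fun b => BS b /\ S b) E.
  by apply: spanE; split=> //; constructor 1; exists e.
have Ysub : forall a, kspan (A := RK) (fun b => BS b /\ S b) (kadd RK a E) ->
    kspan (A := RK) (fun b => BS b /\ S b) a.
  move=> a ha; have -> : a = kadd RK (kadd RK a E) (kscale RK (-1) E).
    by apply: fext => j /=; rewrite scaleN1r addrK.
  by apply: spanD => //; apply: spanZ.
apply: (S_in_Y stS); [exact: span0 | exact: spanD | exact: spanZ | |].
- move=> i y hy.
  case: (dec (i = i0)) => [ei|ni].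
    subst i; have [B'' [sB [sBT _ hB'']]] := (proj2 hB0) _ (IS1 i0).
    apply: (span_emb_gen (X := B'')); [exact: span0 | exact: spanD | exact: spanZ | |].
      move=> b hb; apply: spanE; split; first by constructor 1; exists b; split=> //; apply: sB.
      exact: sBT.
    by apply/hB''.
  have [B'' [sB [sBT _ hB'']]] := (proj2 (proj1 (hBc i))) _ (IS1 i).
  apply: (span_emb_gen (X := B'')); [exact: span0 | exact: spanD | exact: spanZ | |].
    move=> b hb; apply: Ysub; apply: spanE; split.
      by constructor 2; exists i, b; split=> //; apply: sB.
    by apply: SD => //; apply: sBT.
  by apply/hB''.
- move=> hc; apply: Ysub; apply: spanE; split; first by constructor 3.
  by apply: SD => //; apply: vF_S.
Qed.
End WithF. End RkSec.

Section KO.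
Variable K : fieldType.
Local Notation KO := (K^o : algType K).
Local Notation A := (alg_kalg KO).

Lemma ko_full (y : KO) : socle_next (A := A) (fun x => x = 0) y.
Proof.
exists 0; split=> //; exists [:: ((fun _ : KO => True), y)]; split; last by rewrite /ksum /= add0r addr0.
move=> p [<-|//] /=; split=> //; split.
- by split.
- by [].
- by exists 1; split=> //; apply/eqP; rewrite oner_eq0.
- move=> J' [_ _ _ _ J'M] _ _.
  case: (classic (forall x, J' x -> x = 0)) => h; first by left.
  right=> z _; have [a [Ja a0]] : exists a, J' a /\ a <> 0.
    by apply: NNPP => h'; apply: h => x Jx; apply: NNPP => nx; apply: h'; exists x.
  have := J'M a ((a : K)^-1 * (z : K)) Ja I.
  have -> // : kmul A a ((a : K)^-1 * (z : K)) = z.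
  by rewrite /= mulVKf //; apply/eqP.
Qed.

Lemma ko_semi : semiartinian A.
Proof.
exists (socle_next (A := A) (fun x => x = 0)); split; last by move=> x; split=> // _; apply: ko_full.
by apply: socle_termS; exact: socle_term0.
Qed.

Lemma ko_span1 (y : KO) : kspan (A := A) (fun b => b = 1) y.
Proof.
exists [:: (y, 1)]; split; first by move=> p [<-|].
by rewrite /ksum /= addr0; apply/esym; exact: (mulr1 (y : K)).
Qed.

Lemma ko_ind : kindependent (A := A) (fun b => b = 1).
Proof. exact: (@one_indep K unit (fun _ => KO) tt). Qed.

Lemma ko_conormed : conormed (A := A) (fun b => b = 1).
Proof.
split.
  split; [by [] | exact: ko_ind | by move=> x; split=> // _; apply: ko_span1].
move=> S stS; have [_ S0 _ _ SM] := ak_ideal stS.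
case: (classic (forall x, S x -> x = 0)) => h.
  exists (fun _ => False); split=> //; split=> //.
  - by move=> l _ hl _ p /hl.
  - move=> x; split.
      by move/h => ->; exists [::].
    move=> [[|p l] [hl ->]] //.
    by case: (hl p (or_introl erefl)).
have [a [Sa a0]] : exists a, S a /\ a <> 0.
  by apply: NNPP => h'; apply: h => x Sx; apply: NNPP => nx; apply: h'; exists x.
have full : forall z, S z.
  move=> z; have := SM a ((a : K)^-1 * (z : K)) Sa I.
  have -> // : kmul A a ((a : K)^-1 * (z : K)) = z.
  by rewrite /= mulVKf //; apply/eqP.
exists (fun b => b = 1); split=> //; split=> //.
- exact: ko_ind.
- by move=> x; split=> // _; apply: ko_span1.
Qed.

Lemma ko_strong : strong_multiplicative (A := A) (fun b => b = 1).
Proof. by move=> b b' -> ->; rewrite /= mulr1. Qed.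

Lemma ko_mult : Defs.multiplicative (A := A) (fun b => b = 1).
Proof. by move=> b b' -> ->; right; rewrite /= mulr1. Qed.
End KO.

Lemma main_aux (K : fieldType) :
  (forall (I : Type) (R : I -> algType K),
     infinite_type I ->
     (forall i, semiartinian (alg_kalg (R i)) /\
                exists B, conormed B /\ Defs.multiplicative (A := alg_kalg (R i)) B) ->
     (semiartinian (Rk R) /\
      exists B, conormed B /\ Defs.multiplicative (A := Rk R) B) /\
     (forall (i0 : I) (B0 : R i0 -> Prop) (e : R i0),
        conormed (A := alg_kalg (R i0)) B0 -> strong_multiplicative (A := alg_kalg (R i0)) B0 ->
        B0 e -> e * e = e -> e != 0 ->
        socle_next (A := alg_kalg (R i0)) (fun x => x = 0) e ->
        exists B, conormed B /\ strong_multiplicative (A := Rk R) B)) /\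
  (forall I : Type, infinite_type I ->
     semiartinian (Rk (fun _ : I => K^o)) /\
     exists B, conormed B /\ strong_multiplicative (A := Rk (fun _ : I => K^o)) B).
Proof.
have part1 : forall (I : Type) (R : I -> algType K),
     infinite_type I ->
     (forall i, semiartinian (alg_kalg (R i)) /\
                exists B, conormed B /\ Defs.multiplicative (A := alg_kalg (R i)) B) ->
     (semiartinian (Rk R) /\
      exists B, conormed B /\ Defs.multiplicative (A := Rk R) B) /\
     (forall (i0 : I) (B0 : R i0 -> Prop) (e : R i0),
        conormed (A := alg_kalg (R i0)) B0 -> strong_multiplicative (A := alg_kalg (R i0)) B0 ->
        B0 e -> e * e = e -> e != 0 ->
        socle_next (A := alg_kalg (R i0)) (fun x => x = 0) e ->
        exists B, conormed B /\ strong_multiplicative (A := Rk R) B).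
  move=> I R inf hyp.
  have semi : forall i, semiartinian (alg_kalg (R i)) by move=> i; case: (hyp i).
  pose Bc i := proj1_sig (constructive_indefinite_description _ (proj2 (hyp i))).
  have hBc : forall i, conormed (A := alg_kalg (R i)) (Bc i) /\
      Defs.multiplicative (A := alg_kalg (R i)) (Bc i).
    by move=> i; exact: (proj2_sig (constructive_indefinite_description _ (proj2 (hyp i)))).
  have [F hF] := findF inf semi.
  split; first split.
  - exists (Ustar (R := R)); split; first exact: Ustar_st.
    exact: Ustar_full.
  - exists (BA F Bc); split; [exact: BA_conormed | exact: BA_mult].
  - move=> i0 B0 e hB0 sB0 B0e ee _ esoc.
    have hF' : forall S, socle_term (A := Rk R) S -> cc S ->
        forall i, ~ List.In i (i0 :: F) -> S (emb (1 : R i)).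
      by move=> S stS hc i hi; apply: hF => // h; apply: hi; right.
    exists (BS (i0 :: F) Bc B0 e); split.
    + exact: (BS_conormed inf semi hF' hBc hB0 B0e esoc (or_introl erefl)).
    + exact: (BS_strong (F := i0 :: F) hBc sB0 B0e ee (or_introl erefl)).
split; first exact: part1.
move=> I inf.
have hyp : forall i : I, semiartinian (alg_kalg ((fun _ : I => K^o) i)) /\
    exists B, conormed B /\ Defs.multiplicative (A := alg_kalg ((fun _ : I => K^o) i)) B.
  move=> i; split; first exact: ko_semi.
  by exists (fun b => b = 1); split; [exact: ko_conormed | exact: ko_mult].
have [[sa _] p2] := part1 I (fun _ => K^o) inf hyp.
split=> //.
have [f _] := inf.
apply: (p2 (f 0%N) (fun b => b = 1) 1).
- exact: ko_conormed.
- exact: ko_strong.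
- by [].
- by rewrite mulr1.
- by rewrite oner_eq0.
- exact: ko_full.
Qed.

End Helpers.

Unset Implicit Arguments.
Set Strict Implicit.

Theorem lemma6p4 (K : fieldType) :
  (forall (I : Type) (R : I -> algType K),
     infinite_type I ->
     (forall i, semiartinian (alg_kalg (R i)) /\
                exists B, conormed B /\ multiplicative (A := alg_kalg (R i)) B) ->
     (semiartinian (Rk R) /\
      exists B, conormed B /\ multiplicative (A := Rk R) B) /\
     (forall (i0 : I) (B0 : R i0 -> Prop) (e : R i0),
        conormed (A := alg_kalg (R i0)) B0 -> strong_multiplicative (A := alg_kalg (R i0)) B0 ->
        B0 e -> e * e = e -> e != 0 ->
        socle_next (A := alg_kalg (R i0)) (fun x => x = 0) e ->
        exists B, conormed B /\ strong_multiplicative (A := Rk R) B)) /\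
  (forall I : Type, infinite_type I ->
     semiartinian (Rk (fun _ : I => K^o)) /\
     exists B, conormed B /\ strong_multiplicative (A := Rk (fun _ : I => K^o)) B).
Proof.
exact: Helpers.main_aux.
Qed.
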